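(* Let $G_0$ be a fixed $n\times l$ binary matrix, $G_1$ a fixed $n\times k$ binary matrix, $\mathbf m\in\{0,1\}^k$ fixed, and let $t_0=\lfloor (d_0-1)/2\rfloor$. For every $u$ with $1\le u\le d_0+t_0$, $$P(E=0\mid U=u)=\frac12\cdot\frac{\sum_{w=d_0}^{u}B_{0,w}\binom{n-w}{u-w}}{\binom{n}{u}}.$$
   Context: All arithmetic is over $\mathrm{GF}(2)$. $\mathcal C_0^{\perp}=\{\mathbf x\in\{0,1\}^n: G_0^T\mathbf x=\mathbf 0\}$; $B_{0,w}$ is the number of vectors of Hamming weight $w$ in $\mathcal C_0^\perp$, and $d_0$ is the minimum Hamming weight of a nonzero vector of $\mathcal C_0^\perp$ (empty sums are $0$). Defect model: each of the $n$ memory cells is independently defective with probability $\beta\in(0,1)$; a defective cell is stuck at $0$ or at $1$, each with probability $1/2$, independently. Let $\mathcal U$ be the set of defect positions, $U=|\mathcal U|$, $\mathbf s^{\mathcal U}$ the vector of stuck-at values; conditionally on $U=u$, $\mathcal U$ is a uniform random $u$-subset and $\mathbf s^{\mathcal U}$ is uniform on $\{0,1\}^u$. For a matrix $M$ (resp. vector $\mathbf v$) with rows indexed by $\{1,\dots,n\}$, $M^{\mathcal U}$ (resp. $\mathbf v^{\mathcal U}$) denotes the rows indexed by $\mathcal U$. Encoding: with $\mathbf b^{\mathcal U}=(G_1\mathbf m)^{\mathcal U}+\mathbf s^{\mathcal U}$, look for $\mathbf d\in\{0,1\}^l$ with $G_0^{\mathcal U}\mathbf d=\mathbf b^{\mathcal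 U}$; $E=1$ if such $\mathbf d$ exists and $E=0$ (encoding failure) otherwise. *)

(* Defs.v *)
From HB Require Import structures.
From mathcomp Require Import all_boot all_order all_algebra.
Set Implicit Arguments. Unset Strict Implicit. Unset Printing Implicit Defensive.
Import Order.TTheory GRing.Theory Num.Theory.
Local Open Scope ring_scope.

Definition wt (n : nat) (x : 'cV['F_2]_n) : nat := #|[set i | x i ord0 != 0]|.

Definition dual (n l : nat) (G0 : 'M['F_2]_(n, l)) : {set 'cV['F_2]_n} :=
  [set x : 'cV['F_2]_n | G0^T *m x == 0].

Definition Bw (n l : nat) (G0 : 'M['F_2]_(n, l)) (w : nat) : nat :=
  #|[set x in dual G0 | (wt x == w)%N]|.

Definition is_min_dist (n l : nat) (G0 : 'M['F_2]_(n, l)) (d : nat) : Prop :=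
  (exists2 x, x \in dual G0 & (x != 0) && (wt x == d)%N) /\
  (forall x, x \in dual G0 -> x != 0 -> (d <= wt x)%N).

(* Encoding success for defect set S and stuck-at values s (s is the
   vector s^U, stored as a length-n vector vanishing outside S):
   there is d with G0^S d = (G1 m)^S + s^S. *)
Definition encodable (n l k : nat) (G0 : 'M['F_2]_(n, l)) (G1 : 'M['F_2]_(n, k))
  (m : 'cV['F_2]_k) (S : {set 'I_n}) (s : 'cV['F_2]_n) : bool :=
  [exists d : 'cV['F_2]_l, [forall i in S, (G0 *m d) i ord0 == (G1 *m m) i ord0 + s i ord0]].

(* stuck-at patterns on S: vectors in {0,1}^S, represented as length-n
   vectors that are zero outside S (a bijection with {0,1}^S). *)
Definition patterns (n : nat) (S : {set 'I_n}) : {set 'cV['F_2]_n} :=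
  [set s : 'cV['F_2]_n | [forall i in ~: S, s i ord0 == 0]].

(* P(E = 0 | U = u): given U = u, the defect set is a uniform u-subset and
   the stuck-at vector is uniform on {0,1}^u. *)
Definition fail_prob (n l k : nat) (G0 : 'M['F_2]_(n, l)) (G1 : 'M['F_2]_(n, k))
  (m : 'cV['F_2]_k) (u : nat) : rat :=
  (\sum_(S : {set 'I_n} | (#|S| == u)%N)
     (#|[set s in patterns S | ~~ encodable G0 G1 m S s]|)%:R / (2 ^ u)%:R)
  / ('C(n, u))%:R.

(* Main.v *)
Require Import Defs.
From HB Require Import structures.
From mathcomp Require Import all_boot all_order all_algebra zify.
Import Order.TTheory GRing.Theory Num.Theory.
Local Open Scope ring_scope.
Set Implicit Arguments. Unset Strict Implicit.

Lemma F2_xor (a b : 'F_2) : (a + b != 0) = (a != 0) (+) (b != 0).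
Proof. by move: a b; do 2 case=> [[|[|?]]] ?. Qed.

Lemma card_F2 : #|'F_2| = 2%N.
Proof. by rewrite card_Fp. Qed.

Lemma card_rowspace (m n : nat) (M : 'M['F_2]_(m, n)) :
  #|[set y : 'rV_n | (y <= M)%MS]| = (2 ^ \rank M)%N.
Proof.
have -> : [set y : 'rV_n | (y <= M)%MS] = [set x *m row_base M | x : 'rV_(\rank M)].
  apply/setP=> y; rewrite inE; apply/idP/imsetP.
    move=> H; have /submxP[D ->] : (y <= row_base M)%MS by rewrite eq_row_base.
    by exists D.
  move=> [x _ ->]; apply: submx_trans (submxMl _ _) _.
  by rewrite eq_row_base.
rewrite card_imset; last exact/row_free_inj/row_base_free.
by rewrite card_mx card_F2 mul1n.
Qed.

Lemma card_colimage (n l : nat) (A : 'M['F_2]_(n, l)) :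
  #|[set A *m d | d : 'cV_l]| = (2 ^ \rank A)%N.
Proof.
rewrite -mxrank_tr -card_rowspace -(card_imset _ (@trmx_inj _ _ _)).
apply: eq_card => v; rewrite [in RHS]inE; apply/imsetP/idP.
  by move=> [x /imsetP[d _ ->] ->]; rewrite trmx_mul submxMl.
move=> /submxP[D ->]; exists (A *m D^T); first by apply/imsetP; exists D^T.
by rewrite trmx_mul trmxK.
Qed.

Lemma card_ker (n l : nat) (A : 'M['F_2]_(n, l)) :
  #|[set y : 'rV_n | y *m A == 0]| = (2 ^ (n - \rank A))%N.
Proof.
rewrite -mxrank_ker -card_rowspace; apply: eq_card => y.
by rewrite !inE sub_kermx.
Qed.

Lemma card_patterns (n : nat) (S : {set 'I_n}) : #|patterns S| = (2 ^ #|S|)%N.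
Proof.
pose f (v : 'cV['F_2]_n) : {ffun 'I_n -> 'F_2} := [ffun i => v i ord0].
have finj : injective f.
  move=> v w /ffunP H; apply/matrixP=> i j; rewrite (ord1 j).
  by have := H i; rewrite !ffunE.
rewrite -(card_imset _ finj).
have -> : (2 ^ #|S| = #|pffun_on (0%R : 'F_2) S predT|)%N.
  by rewrite card_pffun_on; congr (_ ^ _)%N; exact/esym/card_F2.
apply: eq_card => h; apply/imsetP/pffun_onP.
  move=> [v]; rewrite inE => /forallP Hv ->; split=> //.
  apply/subsetP=> i; rewrite inE ffunE; apply: contraR => iS.
  by have := Hv i; rewrite inE iS /= => /eqP ->.
move=> [/subsetP Hs _]; exists (\col_i h i).
  rewrite inE; apply/forallP=> i; apply/implyP; rewrite inE mxE => iS.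
  by apply: contraR iS => hi; apply: Hs; rewrite inE.
by apply/ffunP=> i; rewrite !ffunE mxE.
Qed.

Definition Pm n (S : {set 'I_n}) : 'M['F_2]_n := diag_mx (\row_j ((j \in S)%:R)).

Lemma PmE n (S : {set 'I_n}) p (v : 'M_(n, p)) i j :
  (Pm S *m v) i j = if i \in S then v i j else 0.
Proof. by rewrite mul_diag_mx !mxE; case: (i \in S); rewrite ?mul1r ?mul0r. Qed.

Lemma mPE n (S : {set 'I_n}) p (v : 'M_(p, n)) i j :
  (v *m Pm S) i j = if j \in S then v i j else 0.
Proof. by rewrite mul_mx_diag !mxE; case: (j \in S); rewrite ?mulr1 ?mulr0. Qed.

Definition supp n (x : 'cV['F_2]_n) := [set i | x i ord0 != 0].

Definition Wset n l (G0 : 'M['F_2]_(n, l)) (S : {set 'I_n}) :=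
  [set x in dual G0 | supp x \subset S].

Lemma card_kerP n l (G0 : 'M['F_2]_(n, l)) (S : {set 'I_n}) :
  #|[set y : 'rV_n | y *m (Pm S *m G0) == 0]| = (#|Wset G0 S| * 2 ^ (n - #|S|))%N.
Proof.
pose f (y : 'rV['F_2]_n) := (y *m Pm S)^T.
have fE y i : f y i ord0 = if i \in S then y ord0 i else 0.
  by rewrite /f mxE mPE.
have Kf y : (y \in [set y : 'rV_n | y *m (Pm S *m G0) == 0]) = (f y \in Wset G0 S).
  rewrite /Wset /dual !inE /f -trmx_mul mulmxA.
  have -> : (supp (y *m Pm S)^T \subset S) = true.
    apply/subsetP=> i; rewrite inE mxE mPE; by case: (i \in S); rewrite ?eqxx.
  by rewrite andbT -[X in _ = X](inj_eq (@trmx_inj _ _ _)) trmx0 trmxK.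
rewrite -sum1_card (partition_big f (mem (Wset G0 S))); last by move=> y; rewrite Kf.
rewrite -sum_nat_const; apply: eq_bigr => w Ww.
rewrite (eq_bigl (fun y => f y == w)); last first.
  by move=> y; rewrite /= Kf; case: eqP => [->|]; rewrite ?Ww ?andbF ?andbT.
rewrite sum1_card.
have -> : (n - #|S| = #|~: S|)%N.
  by have := cardsC S; rewrite card_ord => H; rewrite -{1}H addKn.
rewrite -card_patterns -(card_imset _ (fun v1 v2 (H : (v1 + w)^T = (v2 + w)^T) => addIr w (trmx_inj H))).
have /andP[_ /subsetP Hw] : (w \in dual G0) && (supp w \subset S) by move: Ww; rewrite /Wset !inE.
apply: eq_card => y; rewrite -[LHS]/(f y == w); apply/idP/imsetP.
  move=> /eqP Hy; exists (y^T - w); last by rewrite subrK trmxK.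
  rewrite inE; apply/forallP=> i; apply/implyP; rewrite !inE => /negPn iS.
  by rewrite !mxE -Hy fE iS subrr.
move=> [v]; rewrite inE => /forallP Hv -> {y}; apply/eqP/matrixP=> i j; rewrite (ord1 j) fE !mxE.
case: ifP => iS.
  by have := Hv i; rewrite !inE negbK iS /= => /eqP ->; rewrite add0r.
apply/esym/eqP; apply: contraFT iS => h; apply: Hw; rewrite inE; exact: h.
Qed.

Lemma Pm_pat n (S : {set 'I_n}) (s : 'cV['F_2]_n) : s \in patterns S -> Pm S *m s = s.
Proof.
rewrite inE => /forallP Hs; apply/matrixP=> i j; rewrite PmE (ord1 j).
case: ifP => // iS; have := Hs i; rewrite inE iS /= => /eqP ->; by [].
Qed.

Lemma pat_Pm n (S : {set 'I_n}) (v : 'cV['F_2]_n) : Pm S *m v \in patterns S.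
Proof.
rewrite inE; apply/forallP=> i; apply/implyP; rewrite inE => iS.
by rewrite PmE (negbTE iS).
Qed.

Lemma encodableE n l k (G0 : 'M['F_2]_(n, l)) (G1 : 'M['F_2]_(n, k)) m
  (S : {set 'I_n}) (s : 'cV_n) :
  encodable G0 G1 m S s = (Pm S *m (G1 *m m + s) \in [set Pm S *m G0 *m d | d : 'cV_l]).
Proof.
apply/existsP/imsetP.
  move=> [d /forallP Hd]; exists d => //; apply/matrixP=> i j.
  rewrite -mulmxA !PmE (ord1 j); case: ifP => // iS.
  by have := Hd i; rewrite iS /= => /eqP ->; rewrite mxE.
move=> [d _ Hd]; exists d; apply/forallP=> i; apply/implyP=> iS.
have := congr1 (fun M : 'cV_n => M i ord0) Hd.
by rewrite -mulmxA !PmE iS mxE => ->.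
Qed.

Lemma cards_split (T : finType) (A : {set T}) (p : pred T) :
  (#|[set x in A | ~~ p x]| + #|[set x in A | p x]| = #|A|)%N.
Proof.
rewrite -(cardsID [set x | p x] A) [RHS]addnC; congr (_ + _)%N; first apply: eq_card => x.
  by rewrite !inE andbC.
by apply: eq_card => x; rewrite !inE.
Qed.

Lemma fail_count n l k (G0 : 'M['F_2]_(n, l)) (G1 : 'M['F_2]_(n, k)) m
  (S : {set 'I_n}) :
  (#|[set s in patterns S | ~~ encodable G0 G1 m S s]| +
   #|[set Pm S *m G0 *m d | d : 'cV_l]| = 2 ^ #|S|)%N.
Proof.
rewrite -card_patterns -[in RHS](cards_split (patterns S) (encodable G0 G1 m S)); congr (_ + _)%N.
pose g (s : 'cV['F_2]_n) := Pm S *m (G1 *m m + s).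
have ginj : {in [set s in patterns S | encodable G0 G1 m S s] &, injective g}.
  move=> s1 s2 /setIdP[H1 _] /setIdP[H2 _].
  by rewrite /g !mulmxDr (Pm_pat H1) (Pm_pat H2) => /addrI.
rewrite -(card_in_imset ginj); apply: eq_card => v; apply/idP/idP.
  move=> Hv; have Hp : v - Pm S *m (G1 *m m) \in patterns S.
    move: (Hv) => /imsetP[d _ ->]; rewrite -mulmxA -mulmxBr; exact: pat_Pm.
  apply/imsetP; exists (v - Pm S *m (G1 *m m)).
    rewrite inE Hp /= encodableE.
    by rewrite mulmxDr (Pm_pat Hp) addrC subrK.
  by rewrite /g mulmxDr (Pm_pat Hp) addrC subrK.
move=> /imsetP[s /setIdP[_ H] ->]; by rewrite encodableE in H.
Qed.

Lemma Im_W n l (G0 : 'M['F_2]_(n, l)) (S : {set 'I_n}) :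
  (#|[set Pm S *m G0 *m d | d : 'cV_l]| * #|Wset G0 S| = 2 ^ #|S|)%N.
Proof.
have rle : (\rank (Pm S *m G0) <= n)%N by apply: rank_leq_row.
have Sle : (#|S| <= n)%N by rewrite -[X in (_ <= X)%N](card_ord n) max_card.
have := card_kerP G0 S; rewrite card_ker => H.
apply/eqP; rewrite -(eqn_pmul2r (expn_gt0 2 (n - #|S|))) -mulnA -H card_colimage.
by rewrite -!expnD !subnKC.
Qed.

Lemma F2_add0 (a b : 'F_2) : a + b = 0 -> a = b.
Proof. move=> H; apply/eqP; rewrite -subr_eq0; move: H; move: a b; do 2 case=> [[|[|?]]] ? //. Qed.

Lemma wt_gt0 n (x : 'cV['F_2]_n) : x != 0 -> (0 < wt x)%N.
Proof.
apply: contraR; rewrite -eqn0Ngt => /eqP /cards0_eq H.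
apply/eqP/matrixP=> i j; rewrite (ord1 j) mxE.
apply/eqP; apply: contraT => hi.
have : i \in [set i | x i ord0 != 0] by rewrite inE.
by rewrite /wt H inE.
Qed.

Lemma arith (s d0 h a b U I : nat) (o : bool) : (0 < d0)%N -> (s <= d0 + h)%N ->
  (I <= U)%N -> (o + h.*2)%N = d0.-1 -> (U <= s)%N -> (U + I = a + b)%N ->
  (d0 <= a)%N -> (d0 <= b)%N -> (d0 <= U - I)%N -> False.
Proof. move=> *; lia. Qed.

Lemma W_uniq n l (G0 : 'M['F_2]_(n, l)) (S : {set 'I_n}) (d0 : nat) :
  is_min_dist G0 d0 -> (#|S| <= d0 + (d0.-1)./2)%N ->
  {in Wset G0 S &, forall x y, x != 0 -> y != 0 -> x = y}.
Proof.
move=> [[x0 x0D /andP[x0n /eqP x0w]] Hmin] HS x y.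
rewrite /Wset => /setIdP[xD xS] /setIdP[yD yS] xn yn.
apply/eqP; apply: contraT => xy.
have d0pos : (0 < d0)%N by rewrite -x0w wt_gt0.
have zD : x + y \in dual G0.
  by move: xD yD; rewrite !inE mulmxDr => /eqP -> /eqP ->; rewrite addr0.
have zn : x + y != 0.
  apply: contra xy => /eqP H; apply/eqP/matrixP=> i j.
  by apply: F2_add0; have := congr1 (fun M : 'cV['F_2]_n => M i j) H; rewrite !mxE.
have hx := Hmin _ xD xn; have hy := Hmin _ yD yn; have hz := Hmin _ zD zn.
have Ez : [set i | (x + y) i ord0 != 0] =
  ([set i | x i ord0 != 0] :|: [set i | y i ord0 != 0]) :\:
  ([set i | x i ord0 != 0] :&: [set i | y i ord0 != 0]).
  apply/setP=> i; rewrite !inE mxE F2_xor.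
  by case: (x i ord0 != 0%R); case: (y i ord0 != 0%R).
move: hx hy hz; rewrite /wt Ez cardsDS ?subsetIl ?subIset ?subsetUl //.
have := cardsUI [set i | x i ord0 != 0%R] [set i | y i ord0 != 0%R].
have : (#|[set i | x i ord0 != 0%R] :|: [set i | y i ord0 != 0%R]| <= #|S|)%N.
  by apply: subset_leq_card; rewrite subUset xS yS.
have := odd_double_half d0.-1.
have Hsub : (#|[set i | x i ord0 != 0%R] :&: [set i | y i ord0 != 0%R]| <=
            #|[set i | x i ord0 != 0%R] :|: [set i | y i ord0 != 0%R]|)%N.
  by apply: subset_leq_card; apply: subset_trans (subsetIl _ _) (subsetUl _ _).
move=> Hodd HU HUI hx hy hz; suff : False by []; exact: (arith d0pos HS Hsub Hodd HU HUI hx hy hz).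
Qed.

Lemma card_supsets n (T : {set 'I_n}) u : (u <= n)%N ->
  #|[set S : {set 'I_n} | (#|S| == u) && (T \subset S)]| =
  if (#|T| <= u)%N then 'C(n - #|T|, u - #|T|) else 0%N.
Proof.
move=> un; have cT := cardsC T; rewrite card_ord in cT.
case: leqP => Tu; last first.
  apply: eq_card0 => S; rewrite !inE; apply/negP => /andP[/eqP Su TS].
  by have := subset_leq_card TS; rewrite Su leqNgt Tu.
rewrite -(card_imset _ (@setC_inj _)).
rewrite -bin_sub; last by lia.
have -> : ((n - #|T|) - (u - #|T|) = n - u)%N by lia.
have -> : (n - #|T| = #|~: T|)%N by lia.
rewrite -cards_draws; apply: eq_card => A; rewrite [RHS]inE.
apply/imsetP/andP.
  move=> [S]; rewrite inE => /andP[/eqP Su TS] ->; split; first by rewrite setCS.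
  by have := cardsC S; rewrite card_ord Su => H; apply/eqP; lia.
move=> [AT /eqP Ac]; exists (~: A); last by rewrite setCK.
rewrite inE -setCS setCK AT andbT.
by have := cardsC A; rewrite card_ord Ac => H; apply/eqP; lia.
Qed.

Lemma per_S n l k (G0 : 'M['F_2]_(n, l)) (G1 : 'M['F_2]_(n, k)) m
  (S : {set 'I_n}) (d0 : nat) :
  is_min_dist G0 d0 -> (#|S| <= d0 + (d0.-1)./2)%N ->
  ((#|[set s in patterns S | ~~ encodable G0 G1 m S s]|)%:R / (2 ^ #|S|)%:R : rat)
  = (#|Wset G0 S :\ 0|)%:R / 2.
Proof.
move=> Hd HS.
have F := fail_count G0 G1 m S; have IW := Im_W G0 S.
have W0 : (0 : 'cV['F_2]_n) \in Wset G0 S.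
  rewrite /Wset /dual !inE mulmx0 eqxx /=; apply/subsetP=> i.
  by rewrite /supp inE mxE eqxx.
have W1 : (#|Wset G0 S :\ 0%R| <= 1)%N.
  apply/card_le1_eqP=> x y /setD1P[xn xW] /setD1P[yn yW].
  exact: (W_uniq Hd HS).
have WD := cardsD1 (0%R : 'cV['F_2]_n) (Wset G0 S); rewrite W0 in WD.
move: F IW WD W1.
set f := #|[set s in patterns S | ~~ encodable G0 G1 m S s]|.
set I := #|[set Pm S *m G0 *m d | d : 'cV_l]|.
set w := #|Wset G0 S :\ 0|.
set W := #|Wset G0 S|.
move: (2 ^ #|S|)%N (expn_gt0 2 #|S|) => P Ppos F IW WD W1.
have E : (f * 2 = w * P)%N.
  have [Hw|Hw] : w = 0%N \/ w = 1%N by lia.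
    by rewrite Hw /= in WD; rewrite WD muln1 in IW; lia.
  by rewrite Hw /= in WD; rewrite WD in IW; lia.
apply/eqP; rewrite eqr_div ?pnatr_eq0 -?lt0n //.
by rewrite -!natrM eqr_nat E.
Qed.

Lemma card_sum (T : finType) (P p : pred T) :
  #|[set x | P x && p x]| = (\sum_(x | P x) p x)%N.
Proof.
rewrite -sum1_card (eq_bigl (fun x => P x && p x)); last by move=> x; rewrite !inE.
rewrite big_mkcondr /=; apply: eq_bigr => x _; by case: (p x).
Qed.

Lemma sum_ind (m p a : nat) : (\sum_(m <= i < p) (i == a) = (m <= a < p))%N.
Proof.
rewrite (eq_bigr (fun i => if i == a then 1 else 0)%N); last by move=> i _; case: (i == a).
rewrite -big_mkcond sum1_count.
have := count_uniq_mem a (iota_uniq m (p - m)); rewrite /index_iota => ->.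
rewrite mem_iota; case: (leqP m p) => H; first by rewrite subnKC.
by rewrite (eqP (ltnW H)) addn0; case: (leqP m a) => // H2; rewrite ltnNge (leq_trans (ltnW H) H2).
Qed.

Lemma sum_identity n l (G0 : 'M['F_2]_(n, l)) (d0 u : nat) :
  is_min_dist G0 d0 -> (u <= n)%N ->
  (\sum_(S : {set 'I_n} | #|S| == u) #|Wset G0 S :\ 0%R|)%N =
  (\sum_(d0 <= w < u.+1) Bw G0 w * 'C(n - w, u - w))%N.
Proof.
move=> [[x0 x0D /andP[x0n /eqP x0w]] Hmin] un.
have d0pos : (0 < d0)%N by rewrite -x0w wt_gt0.
have HW S : #|Wset G0 S :\ 0%R| =
    (\sum_(x | x \in dual G0) ((x != 0%R) && (supp x \subset S)))%N.
  rewrite -card_sum; apply: eq_card => x; rewrite /Wset !inE.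
  by rewrite andbCA.
rewrite (eq_bigr _ (fun S _ => HW S)) [LHS]exchange_big /=.
have HB w : Bw G0 w = (\sum_(x | x \in dual G0) (wt x == w))%N.
  by rewrite /Bw -card_sum.
rewrite (eq_bigr _ (fun w _ => congr1 (fun t => t * 'C(n - w, u - w))%N (HB w))).
rewrite (eq_bigr _ (fun w _ => big_distrl _ _ _)) /= [RHS]exchange_big /=.
apply: eq_bigr => x xD.
rewrite (eq_bigr (fun w => (w == wt x) * 'C(n - wt x, u - wt x)))%N; last first.
  by move=> w _; rewrite eq_sym; case: eqP => // ->.
rewrite -big_distrl /= sum_ind.
have [->|xn] := eqVneq x 0%R.
  rewrite big1 // /wt.
  have -> : #|[set i | (0 : 'cV['F_2]_n) i ord0 != 0%R]| = 0%N.
    by apply: eq_card0 => i; rewrite !inE mxE eqxx.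
  by rewrite leqNgt d0pos.
have Hx := Hmin _ xD xn; rewrite Hx /=.
rewrite -card_sum card_supsets //.
by rewrite /wt -/(supp x) ltnS; case: ifP; rewrite ?mul1n ?mul0n.
Qed.

Unset Implicit Arguments.

Theorem lemma2 (n l k : nat) (G0 : 'M['F_2]_(n, l)) (G1 : 'M['F_2]_(n, k))
  (m : 'cV['F_2]_k) (d0 : nat) (Hd0 : is_min_dist G0 d0) (u : nat)
  (Hu1 : (1 <= u)%N) (Hu2 : (u <= d0 + (d0.-1)./2)%N) (Hun : (u <= n)%N) :
  fail_prob G0 G1 m u =
  (1 / 2 : rat) *
    ((\sum_(d0 <= w < u.+1) Bw G0 w * 'C(n - w, u - w))%N%:R / ('C(n, u))%:R).
Proof.
rewrite /fail_prob.
rewrite (eq_bigr (fun S => (#|Wset G0 S :\ 0%R|)%:R / 2 : rat)); last first.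
  move=> S /eqP Su; have HS : (#|S| <= d0 + (d0.-1)./2)%N by rewrite Su.
  by rewrite -(@per_S n l k G0 G1 m S d0 Hd0 HS) Su.
rewrite -mulr_suml -natr_sum (sum_identity Hd0 Hun).
by rewrite mul1r !mulrA [_ * 2^-1]mulrC.
Qed.
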